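(* For every $g\ge 3$, there exist graphs of girth $g$ that do not belong to CBU.
   Context: Let $e_1,\ldots,e_d$ be the standard basis of $\mathbb{R}^d$. For $d\ge 1$, a graph belongs to $d$-CBU if one can assign to each vertex an axis-parallel box (product of $d$ closed intervals of positive length) in $\mathbb{R}^d$ such that the boxes have pairwise disjoint interiors, two distinct vertices are adjacent iff their boxes intersect, and any two intersecting boxes intersect in a $(d-1)$-dimensional box orthogonal to $e_1$. CBU is the union of $d$-CBU over all $d\ge 1$. *)

(* Defs.v *)
From mathcomp Require Import all_boot.
From Stdlib Require Import Reals.

Set Implicit Arguments.
Unset Strict Implicit.
Unset Printing Implicit Defensive.

Definition simple_graph (T : finType) (e : rel T) : Prop :=
  symmetric e /\ irreflexive e.

Definition is_cycle_of_length (T : finType) (e : rel T) (s : seq T) (k : nat)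
  : Prop :=
  size s = k /\ (3 <= k)%N /\ uniq s /\ cycle e s.

Definition has_girth (T : finType) (e : rel T) (g : nat) : Prop :=
  (exists s, is_cycle_of_length e s g) /\
  (forall s k, is_cycle_of_length e s k -> (g <= k)%N).

(* d-CBU (for d >= 1): coordinates are indexed by i < d, coordinate 0
   corresponds to e_1.  Vertex v gets the box prod_{i<d} [lo v i, hi v i]. *)
Definition box_rep (T : finType) (e : rel T) (d : nat)
  (lo hi : T -> nat -> R) : Prop :=
  (forall v i, (i < d)%N -> (lo v i < hi v i)%R) /\
  (* pairwise disjoint interiors: some coordinate has disjoint open intervals *)
  (forall u v, u != v ->
     exists i, (i < d)%N /\ ((hi u i <= lo v i)%R \/ (hi v i <= lo u i)%R)) /\
  (forall u v, u != v ->
     (e u v <-> forall i, (i < d)%N ->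
                  (lo u i <= hi v i)%R /\ (lo v i <= hi u i)%R)) /\
  (* intersecting boxes meet in a (d-1)-dimensional box orthogonal to e_1:
     the intersection is a single point in coordinate 0 and has positive
     length in every other coordinate *)
  (forall u v, u != v ->
     (forall i, (i < d)%N -> (lo u i <= hi v i)%R /\ (lo v i <= hi u i)%R) ->
     Rmax (lo u 0) (lo v 0) = Rmin (hi u 0) (hi v 0) /\
     (forall i, (0 < i < d)%N ->
        (Rmax (lo u i) (lo v i) < Rmin (hi u i) (hi v i))%R)).

Definition in_dCBU (T : finType) (e : rel T) (d : nat) : Prop :=
  (1 <= d)%N /\ exists lo hi : T -> nat -> R, box_rep e d lo hi.

Definition in_CBU (T : finType) (e : rel T) : Prop :=
  exists d, in_dCBU e d.

(* Main.v *)
Require Import Defs.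
From mathcomp Require Import all_boot.
From Stdlib Require Import Reals.
From Stdlib Require Import Lra.
From mathcomp Require Import all_boot zify.
Set Implicit Arguments. Unset Strict Implicit. Unset Printing Implicit Defensive.

Lemma card_fam (aT rT: finType) (F : aT -> pred rT) :
  #|[set f : {ffun aT -> rT} | [forall x, F x (f x)]]| = \prod_x #|F x|.
Proof.
have -> : #|[set f : {ffun aT -> rT} | [forall x, F x (f x)]]| = #|family F|.
  apply: eq_card => f; rewrite inE; apply/forallP/familyP => H x; exact: H.
by rewrite card_family /image_mem foldrE big_map big_enum.
Qed.

Definition Reqb (x y : R) : bool := if Req_EM_T x y then true else false.
Lemma ReqbP x y : reflect (x = y) (Reqb x y).
Proof. rewrite /Reqb; case: Req_EM_T => H; constructor => //. Qed.

Lemma card_two (U : finType) (a b : U) : a != b ->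
  4 * #|[set X : {ffun U -> bool} | ~~ X a && X b]| = 2 ^ #|U|.
Proof.
move=> nab.
pose F := (fun (x : U) (y : bool) => if x == a then ~~ y else if x == b then y else true).
have -> : [set X : {ffun U -> bool} | ~~ X a && X b] =
  [set X : {ffun U -> bool} | [forall x, F x (X x)]].
  apply/setP => X; rewrite !inE; apply/andP/forallP => [[Ha Hb] x|H].
    by rewrite /F; case: eqP => [->//|_]; case: eqP => [->//|_].
  have := H a; rewrite /F eqxx => ->; have := H b; rewrite /F eqxx.
  by rewrite eq_sym (negbTE nab).
rewrite (card_fam F) (bigD1 a) //= (bigD1 b) /=; last by rewrite eq_sym.
have nba : (b == a) = false by apply/negbTE; rewrite eq_sym.
rewrite /F eqxx nba eqxx.
have ca : #|(fun y : bool => ~~ y)| = 1 by rewrite -(card1 false); apply: eq_card => -[].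
have cb : #|(fun y : bool => y)| = 1 by rewrite -(card1 true); apply: eq_card => -[].
rewrite ca cb (eq_bigr (fun _ => 2)); last first.
  move=> x /andP[xb xa]; rewrite (negbTE xa) (negbTE xb).
  by rewrite -(card_bool) ; apply: eq_card.
rewrite prod_nat_const mul1n mul1n.
have : #|U| = #|[pred i | (i != a) && (i != b)]|.+2.
  rewrite (cardD1 a) (cardD1 b) !inE eq_sym nab /=. 
  congr (_.+2); apply: eq_card => x; rewrite !inE andbT andbC //.
move=> ->.
by rewrite !expnS mulnA; congr (_ * _); apply: eq_card.
Qed.

Lemma card_sum_exchange (A B : finType) (P : A -> B -> bool) :
  \sum_(a : A) #|[set b | P a b]| = \sum_(b : B) #|[set a | P a b]|.
Proof.
rewrite (eq_bigr (fun a : A => \sum_(b : B) nat_of_bool (P a b))); last first.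
  by move=> a _; rewrite -sum1_card [LHS]big_mkcond /=; apply: eq_bigr => b _; rewrite inE; case: (P a b).
rewrite exchange_big /=; apply: eq_bigr => b _.
by rewrite -sum1_card [RHS]big_mkcond /=; apply: eq_bigr => a _; rewrite inE; case: (P a b).
Qed.

Section Indep.
Variables (T : finType) (lo hi : T -> nat -> R).
Definition pv (p : T * bool) : R := if p.2 then hi p.1 0%N else lo p.1 0%N.
Definition cr (p : T * bool) : T * bool := odflt p [pick q | Reqb (pv q) (pv p)].
Lemma cr_val p : pv (cr p) = pv p.
Proof. rewrite /cr; case: pickP => [q /ReqbP //|]; done. Qed.
Lemma cr_eq p p' : pv p = pv p' -> cr p = cr p'.
Proof.
move=> E; rewrite /cr (@eq_pick _ _ (fun q => Reqb (pv q) (pv p'))); last by move=> q; rewrite E.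
case: pickP => // H; exfalso; move: (H p'); rewrite /Reqb; case: Req_EM_T => //.
Qed.
End Indep.

Lemma cbu_indep (T : finType) (e : rel T) : in_CBU e ->
  exists I : {set T}, (forall u v, u \in I -> v \in I -> u != v -> ~~ e u v) /\ (#|T| <= 4 * #|I|)%N.
Proof.
move=> [d [d1 [lo [hi [H1 [H2 [H3 H4]]]]]]].
have d0 : (0 < d)%N by [].
have touch : forall u v, u != v -> e u v -> hi u 0%N = lo v 0%N \/ hi v 0%N = lo u 0%N.
  move=> u v nuv euv.
  have Hi := (proj1 (H3 u v nuv) euv).
  have [Hm _] := H4 u v nuv Hi.
  have lu := H1 u 0%N d0; have lv := H1 v 0%N d0.
  move: Hm; rewrite /Rmax /Rmin.
  case: Rle_dec => h1; case: Rle_dec => h2 Hm; lra.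
pose a v := cr lo hi (v, false).
pose b v := cr lo hi (v, true).
have nab : forall v, a v != b v.
  move=> v; apply/eqP => E.
  have := f_equal (pv lo hi) E; rewrite /a /b !cr_val /pv /=.
  have := H1 v 0%N d0; lra.
pose IX (X : {ffun (T * bool) -> bool}) := [set v | ~~ X (a v) && X (b v)].
have indep : forall X u v, u \in IX X -> v \in IX X -> u != v -> ~~ e u v.
  move=> X u v; rewrite !inE => /andP[ua ub] /andP[va vb] nuv; apply/negP => euv.
  case: (touch u v nuv euv) => E.
  - have : b u = a v by apply: cr_eq.
    by move=> E'; move: ub; rewrite E' (negbTE va).
  - have : b v = a u by apply: cr_eq.
    by move=> E'; move: vb; rewrite E' (negbTE ua).
case: (boolP [exists X, (#|T| <= 4 * #|IX X|)%N]) => [/existsP [X HX]|].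
  by exists (IX X); split => //; apply: indep.
rewrite negb_exists => /forallP Hall.
exfalso.
have S1 : (4 * \sum_X #|IX X| = #|T| * 2 ^ #|{: T * bool}|)%N.
  rewrite /IX card_sum_exchange big_distrr /=.
  rewrite (eq_bigr (fun _ => 2 ^ #|{: T * bool}|)) ?sum_nat_const //.
  by move=> v _; rewrite card_two.
have S2 : (\sum_(X : {ffun (T * bool) -> bool}) (4 * #|IX X|).+1 <= \sum_(X : {ffun (T * bool) -> bool}) #|T|)%N.
  by apply: leq_sum => X _; have := Hall X; rewrite -ltnNge.
move: S2; rewrite [in X in (_ <= X)%N]sum_nat_const.
rewrite (eq_bigr (fun X => 4 * #|IX X| + 1)%N); last by move=> X _; rewrite addn1.
rewrite big_split /= -big_distrr /= S1 sum_nat_const !card_ffun !card_bool.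
rewrite muln1 mulnC -[X in (_ <= X)%N]addn0 leq_add2l leqn0 expn_eq0.
by [].
Qed.

Lemma card_bigcup_le (I T : finType) (P : pred I) (F : I -> {set T}) :
  #|\bigcup_(i | P i) F i| <= \sum_(i | P i) #|F i|.
Proof.
elim/big_rec2: _ => [|i x y _ H]; first by rewrite cards0.
by apply: leq_trans (leq_card_setU _ _).1 _; rewrite leq_add2l.
Qed.

Lemma next_next_neq (T : eqType) (s : seq T) y :
  uniq s -> 2 < size s -> y \in s -> next s (next s y) != y.
Proof.
move=> us ss ys; apply/eqP => E.
have Hp : prev s y = next s y by rewrite -{1}E prev_next.
case: (rot_to ys) => i r Er.
have ur : uniq (y :: r) by rewrite -Er rot_uniq.
have sr : 2 < size (y :: r) by rewrite -Er size_rot.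
move: Hp; rewrite -(prev_rot i) // -(next_rot i) // Er.
rewrite next_nth prev_nth mem_head /= eqxx.
move: ur sr => /= /andP[yr ur].
have -> : index y r = size r by apply/eqP; rewrite -[_ == _]negbK eqn_leq index_size /= -ltnNge index_mem.
clear Er E.
case: r yr ur => [|a [|b r3]] //= yr ur _.
move: ur => /andP[ar _] E2.
have := nth_last y (b :: r3); rewrite /= E2 => Ea.
by have := mem_last b r3; rewrite -Ea (negbTE ar).
Qed.

Lemma prod_two_valued (D : finType) (A : {set D}) (F : D -> nat) (a c : nat) :
  (forall x, x \in A -> F x = a) -> (forall x, x \notin A -> F x = c) ->
  \prod_x F x = a ^ #|A| * c ^ (#|{: D}| - #|A|).
Proof.
move=> H1 H2; rewrite (bigID (fun x => x \in A)) /=.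
rewrite (eq_bigr (fun _ => a)) // prod_nat_const.
rewrite [X in _ * X](eq_bigr (fun _ => c)) // prod_nat_const.
congr (_ * _).
congr (_ ^ _); rewrite -(cardsC A) addKn cardsE.
by [].
Qed.

Section Rand.
Variables (Q n' : nat).
Local Notation q := Q.+1.
Local Notation n := n'.+1.
Local Notation V := 'I_n.
Local Notation D := (V * V)%type.
Local Notation FF := {ffun D -> 'I_q}.

Definition key (i j : V) : D := if i < j then (i,j) else (j,i).
Definition ef (f : FF) : rel V := fun i j => (i != j) && (f (key i j) == ord0).

Lemma key_inv a b c d : key a b = key c d -> (a = c /\ b = d) \/ (a = d /\ b = c).
Proof.
rewrite /key; case: ifP => _; case: ifP => _ [-> ->]; auto.
Qed.

Lemma next_key_inj (s : seq V) : uniq s -> 2 < size s ->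
  {in s &, injective (fun x => key x (next s x))}.
Proof.
move=> us ss x y xs ys /key_inv [[]//|[E1 E2]].
exfalso; have := next_next_neq us ss ys; rewrite -E1 E2 eqxx //.
Qed.

Lemma count_cycle (s : seq V) : uniq s -> 2 < size s ->
  #|[set f : FF | cycle (ef f) s]| <= q ^ (#|{: D}| - size s).
Proof.
move=> us ss.
pose A := [set key x (next s x) | x in s].
have cA : #|A| = size s.
  rewrite card_in_imset; first by apply/card_uniqP.
  by apply: next_key_inj.
pose F := fun (x : D) (y : 'I_q) => (x \notin A) || (y == ord0).
apply: (@leq_trans #|[set f : FF | [forall x, F x (f x)]]|).
  apply: subset_leq_card; apply/subsetP => f; rewrite !inE => cf.
  apply/forallP => x; rewrite /F; case: (boolP (x \in A)) => //= /imsetP [y ys ->].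
  by have /andP[_ ->] := next_cycle cf ys.
rewrite (card_fam F) -cA; apply: eq_leq; rewrite (@prod_two_valued _ A _ 1 q) ?exp1n ?mul1n // => x.
  rewrite /F => xA; rewrite -(card1 (ord0 : 'I_q)); apply: eq_card => y; by rewrite !inE xA.
by rewrite /F => xA; transitivity #|{: 'I_q}|; [apply: eq_card => y; rewrite xA | apply: card_ord].
Qed.

Definition Xc (g : nat) (f : FF) :=
  \sum_(l < g | 2 < l) #|[set s : l.-tuple V | uniq s && cycle (ef f) s]|.

Lemma sum_Xc g : \sum_(f : FF) Xc g f <= \sum_(l < g | 2 < l) n ^ l * q ^ (#|{: D}| - l).
Proof.
rewrite /Xc exchange_big /=; apply: leq_sum => l hl.
rewrite card_sum_exchange.
have -> : n ^ l = #|{: l.-tuple V}| by rewrite card_tuple card_ord.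
rewrite -sum_nat_const; apply: leq_sum => s _.
case: (boolP (uniq s)) => us.
  have := count_cycle us; rewrite size_tuple => /(_ hl) H.
  by apply: leq_trans H; apply: subset_leq_card; apply/subsetP => f; rewrite !inE => /andP[].
apply: leq_trans (_ : _ <= 0) _ => //; rewrite leqn0 cards_eq0; apply/eqP/setP => f; rewrite !inE; by move: us; case: (uniq _).
Qed.

Lemma bad1 g c : 2 * (\sum_(l < g | 2 < l) n ^ l * q ^ (#|{: D}| - l)) < c * q ^ #|{: D}| ->
  2 * #|[set f : FF | c <= Xc g f]| < q ^ #|{: D}|.
Proof.
move=> H.
have c0 : 0 < c by case: c H => //; rewrite mul0n.
have H1 : #|[set f : FF | c <= Xc g f]| * c <= \sum_(f : FF) Xc g f.
  rewrite -sum1_card big_distrl /= [X in _ <= X](bigID (fun f => f \in [set f : FF | c <= Xc g f])) /=.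
  apply: (leq_trans _ (leq_addr _ _)).
  by apply: leq_sum => f; rewrite inE mul1n.
have H2 := leq_trans H1 (sum_Xc g).
rewrite -(ltn_pmul2r c0) mulnC (mulnC (q ^ _)).
apply: leq_ltn_trans H; nia.
Qed.

Definition indepS (f : FF) (S : {set V}) :=
  [forall i in S, forall j in S, (i < j) ==> (f (i, j) != ord0)].
Definition pairsS (S : {set V}) : {set D} :=
  [set x : D | (x.1 \in S) && (x.2 \in S) && (x.1 < x.2)].

Lemma card_pairs S : 2 * #|pairsS S| + #|S| = #|S| * #|S|.
Proof.
pose X := setX S S.
pose L := [set x : D | x.1 < x.2].
pose G := [set x : D | x.2 < x.1].
have c1 := cardsID L X.
have c2 := cardsID G (X :\: L).
have eA : X :&: L = pairsS S by apply/setP => x; rewrite !inE andbC.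
have eB : (X :\: L) :&: G = (fun x : D => (x.2, x.1)) @^-1: pairsS S.
  apply/setP => -[a b]; rewrite !inE /=.
  by case: (ltngtP a b); case: (a \in S); case: (b \in S).
have eC : (X :\: L) :\: G = (fun i : V => (i, i)) @: S.
  apply/setP => -[a b]; rewrite !inE /=.
  apply/idP/imsetP => [/and4P[H1 H2 xa xb]|[i iS [-> ->]]].
    exists a => //; congr (_, _); apply/val_inj/anti_leq.
    by rewrite -!leqNgt in H1 H2; rewrite H1 H2.
  by rewrite ltnn iS.
move: c1 c2; rewrite eA cardsX eB card_preimset; last by move=> [a b] [c d] [-> ->].
rewrite eC card_imset; last by move=> i j [].
move=> h1 h2; rewrite -h1 -h2 addnA addnn -mul2n //.
Qed.

Lemma count_indep S : #|[set f : FF | indepS f S]| =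
  Q ^ #|pairsS S| * q ^ (#|{: D}| - #|pairsS S|).
Proof.
pose F := fun (x : D) (y : 'I_q) => (x \notin pairsS S) || (y != ord0).
have -> : [set f : FF | indepS f S] = [set f : FF | [forall x, F x (f x)]].
  apply/setP => f; rewrite !inE; apply/forallP/forallP => H.
    move=> [a b]; rewrite /F inE /=; case: (boolP (a \in S)) => //= aS.
    case: (boolP (b \in S)) => //= bS; have := H a; rewrite aS => /forallP /(_ b).
    by rewrite bS /= => /implyP; case: (a < b) => //= ->.
  move=> a; apply/implyP => aS; apply/forallP => b; apply/implyP => bS; apply/implyP => ab.
  by have := H (a, b); rewrite /F inE /= aS bS ab.
rewrite (card_fam F) (@prod_two_valued _ (pairsS S) _ Q q) // => x.
  rewrite /F => xA; transitivity #|predC1 (ord0 : 'I_q)|.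
    by apply: eq_card => y; rewrite /= xA.
  by rewrite cardC1 card_ord.
by rewrite /F => /negbTE ->; transitivity #|{: 'I_q}|; [apply: eq_card | apply: card_ord].
Qed.

Lemma bad2 t K : 2 * K + t = t * t ->
  #|[set f : FF | [exists S : {set V}, (#|S| == t) && indepS f S]]| <=
    2 ^ n * (Q ^ K * q ^ (#|{: D}| - K)).
Proof.
move=> hK.
have -> : [set f : FF | [exists S : {set V}, (#|S| == t) && indepS f S]] =
  \bigcup_(S : {set V} | #|S| == t) [set f : FF | indepS f S].
  apply/setP => f; rewrite inE; apply/existsP/bigcupP => [[S /andP[St Sf]]|[S St Sf]].
    by exists S => //; rewrite inE.
  by exists S; rewrite St; rewrite inE in Sf.
apply: leq_trans (card_bigcup_le _ _) _.
rewrite (eq_bigr (fun _ => Q ^ K * q ^ (#|{: D}| - K))); last first.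
  move=> S /eqP St; rewrite count_indep.
  have -> // : #|pairsS S| = K by have := card_pairs S; rewrite St; lia.
rewrite sum_nat_const leq_mul2r; apply/orP; right.
have -> : 2 ^ n = #|powerset [set: V]| by rewrite card_powerset cardsT card_ord.
apply: subset_leq_card.
by apply/subsetP => S _; rewrite powersetE subsetT.
Qed.
End Rand.

Lemma bern Q k : Q ^ k.+1 + k.+1 * Q ^ k <= Q.+1 ^ k.+1.
Proof.
elim: k => [|k IH]; first by rewrite expn0 !expn1 muln1 addn1.
rewrite (expnS Q.+1 k.+1).
apply: leq_trans (_ : Q.+1 * (Q ^ k.+1 + k.+1 * Q ^ k) <= _); last by rewrite leq_mul2l IH orbT.
rewrite !expnS; nia.
Qed.

Lemma two_pow Q : 2 * Q ^ Q.+1 <= Q.+1 ^ Q.+1.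
Proof. apply: leq_trans (bern Q Q); rewrite expnS; nia. Qed.

Lemma leq_expL m n e : m <= n -> m ^ e <= n ^ e.
Proof. by move=> h; elim: e => // e IH; rewrite !expnS leq_mul. Qed.

Lemma num_bound Q m N K : Q.+1 * m.+1 <= K -> K <= N ->
  2 ^ m.+1 * (Q ^ K * Q.+1 ^ (N - K)) <= Q.+1 ^ N.
Proof.
move=> h1 h2.
set a := Q.+1 * m.+1.
have -> : K = a + (K - a) by rewrite subnKC.
have -> : N - (a + (K - a)) = N - K by rewrite subnKC.
have eN : N = a + (K - a) + (N - K) by rewrite subnKC // subnKC.
rewrite [in X in _ <= X]eN !expnD.
have ha : 2 ^ m.+1 * Q ^ a <= Q.+1 ^ a.
  rewrite /a mulnC !expnM -expnMn; apply: leq_expL.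
  apply: leq_trans (two_pow Q); by rewrite mulnC.
have hb : Q ^ (K - a) <= Q.+1 ^ (K - a) by apply: leq_expL.
rewrite mulnA mulnA; apply: leq_mul => //; apply: leq_mul => //.
Qed.

Lemma exists_good Q n' g c t K :
  2 * (\sum_(l < g | 2 < l) n'.+1 ^ l * Q.+1 ^ (#|{: 'I_n'.+1 * 'I_n'.+1}| - l))
     < c * Q.+1 ^ #|{: 'I_n'.+1 * 'I_n'.+1}| ->
  2 * K + t = t * t -> Q.+1 * n'.+2 <= K -> K <= #|{: 'I_n'.+1 * 'I_n'.+1}| ->
  exists f : {ffun 'I_n'.+1 * 'I_n'.+1 -> 'I_Q.+1},
    Xc g f < c /\ ~~ [exists S : {set 'I_n'.+1}, (#|S| == t) && indepS f S].
Proof.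
move=> H1 hK h1 h2.
set N := #|{: 'I_n'.+1 * 'I_n'.+1}| in H1 h2 *.
set B1 := [set f : {ffun 'I_n'.+1 * 'I_n'.+1 -> 'I_Q.+1} | c <= Xc g f].
set B2 := [set f : {ffun 'I_n'.+1 * 'I_n'.+1 -> 'I_Q.+1} |
              [exists S : {set 'I_n'.+1}, (#|S| == t) && indepS f S]].
case: (boolP [exists f, (f \notin B1) && (f \notin B2)]).
  move=> /existsP [f /andP[f1 f2]]; exists f; split.
    by move: f1; rewrite inE -ltnNge.
  by move: f2; rewrite inE.
rewrite negb_exists => /forallP Hall; exfalso.
have c1 := @bad1 Q n' g c H1.
have c2 := @bad2 Q n' t K hK.
have c3 := num_bound h1 h2.
have c4 : #|{: {ffun 'I_n'.+1 * 'I_n'.+1 -> 'I_Q.+1}}| <= #|B1| + #|B2|.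
  apply: leq_trans (leq_card_setU B1 B2).1.
  apply: subset_leq_card; apply/subsetP => f _; rewrite inE.
  by have := Hall f; rewrite negb_and !negbK.
move: c4; rewrite card_ffun card_ord -/N => c4.
rewrite -/B1 in c1; rewrite -/B2 in c2.
rewrite -/N in c1 c2.
rewrite expnS -mulnA in c3.
move: c1 c2 c3 c4.
set Y := 2 ^ n'.+1 * (Q ^ K * Q.+1 ^ (N - K)).
set Z := Q.+1 ^ N.
lia.
Qed.

Section Cyc.
Variable g : nat.
Definition ec : rel 'I_g := fun i j => (val j == (val i).+1 %% g) || (val i == (val j).+1 %% g).
Definition succ (i : 'I_g) : nat := (val i).+1 %% g.

Lemma modS a : a < g -> a.+1 %% g = (if a.+1 == g then 0 else a.+1).
Proof. move=> h; case: eqP => [->|ne]; [by rewrite modnn | rewrite modn_small //; lia]. Qed.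

Lemma closed_all (s : seq 'I_g) x0 : x0 \in s ->
  (forall x, x \in s -> exists2 y, y \in s & val y = succ x) -> forall y : 'I_g, y \in s.
Proof.
move=> x0s H.
have step : forall j, exists2 y, y \in s & val y = (x0 + j) %% g.
  elim=> [|j [y ys yv]].
    by exists x0 => //; rewrite addn0 modn_small.
  have [z zs zv] := H y ys; exists z => //; rewrite zv /succ yv.
  by rewrite -[((x0 + j) %% g).+1]addn1 modnDml addn1 addnS.
move=> y; have [z zs zv] := step (y + g - x0).
have -> : y = z; last by [].
apply/val_inj; rewrite zv /=.
have hx := ltn_ord x0; have hy := ltn_ord y.
have -> : x0 + (y + g - x0) = y + g by lia.
by rewrite -modnDmr modnn addn0 modn_small.
Qed.

Lemma cyc_short (s : seq 'I_g) : uniq s -> cycle ec s -> 2 < size s -> size s < g -> False.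
Proof.
move=> us cs ss sg.
have [x xs nx] : exists2 x, x \in s & forall y, y \in s -> val y != succ x.
  case: (boolP [exists x in s, [forall y in s, val y != succ x]]).
    move=> /existsP [x /andP[xs /forallP H]]; exists x => // y ys.
    by have := H y; rewrite ys.
  rewrite negb_exists => /forallP H; exfalso.
  have s0 : exists x0, x0 \in s by case: s ss {us cs sg H} => // x0 s' _; exists x0; rewrite mem_head.
  case: s0 => x0 x0s.
  have all : forall y : 'I_g, y \in s.
    apply: (closed_all x0s) => x xs.
    have := H x; rewrite xs /= negb_forall => /existsP [y].
    by rewrite negb_imply negbK => /andP[ys /eqP E]; exists y.
  have : #|'I_g| <= size s.
    by rewrite -(card_uniqP us); apply: subset_leq_card; apply/subsetP => y _; apply: all.
  by rewrite card_ord leqNgt sg.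
have hn := next_cycle cs xs.
have hp := prev_cycle cs xs.
have nxs : next s x \in s by rewrite mem_next.
have pxs : prev s x \in s by rewrite mem_prev.
have En : val x = (val (next s x)).+1 %% g.
  move: hn; rewrite /ec => /orP [/eqP E|/eqP //].
  by have := nx _ nxs; rewrite /succ E eqxx.
have Ep : val x = (val (prev s x)).+1 %% g.
  move: hp; rewrite /ec => /orP [/eqP //|/eqP E].
  by have := nx _ pxs; rewrite /succ E eqxx.
have Enp : next s x = prev s x.
  apply/val_inj; move: En Ep.
  have h1 := ltn_ord (next s x); have h2 := ltn_ord (prev s x).
  rewrite !modS //; case: eqP; case: eqP; lia.
have := next_next_neq us ss xs.
by rewrite Enp next_prev // eqxx.
Qed.
End Cyc.

Lemma cyc_full g' : cycle (@ec g'.+1) (enum 'I_g'.+1).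
Proof.
apply: cycle_from_next; first exact: enum_uniq.
move=> x _; rewrite next_nth mem_enum.
have hx := ltn_ord x.
case E: (enum 'I_g'.+1) => [|y p'].
  by have := size_enum_ord g'.+1; rewrite E.
have Ey : val y = 0 by have := nth_enum_ord y (ltn0Sn g'); rewrite E.
have -> : nth y p' (index x (y :: p')) = nth y (enum 'I_g'.+1) x.+1 by rewrite -E index_enum_ord E.
rewrite /ec; apply/orP; left; apply/eqP; rewrite inE /=.
case: (ltngtP x.+1 g'.+1) => h.
- by rewrite nth_enum_ord // modn_small.
- lia.
- rewrite nth_default ?size_enum_ord ?h // Ey.
  by rewrite modnn.
Qed.

Lemma cbu_restrict (T T' : finType) (h : T' -> T) (e : rel T) :
  injective h -> in_CBU e -> in_CBU (relpre h e).
Proof.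
move=> hinj [d [d1 [lo [hi [H1 [H2 [H3 H4]]]]]]].
exists d; split => //; exists (fun v i => lo (h v) i), (fun v i => hi (h v) i).
split; [|split; [|split]].
- by move=> v i; apply: H1.
- by move=> u v nuv; apply: H2; rewrite (inj_eq hinj).
- by move=> u v nuv; apply: H3; rewrite (inj_eq hinj).
- by move=> u v nuv; apply: H4; rewrite (inj_eq hinj).
Qed.

Lemma subset_size (T : finType) (A : {set T}) k : k <= #|A| ->
  exists2 S : {set T}, S \subset A & #|S| = k.
Proof.
move=> hk; exists [set x in take k (enum A)].
  by apply/subsetP => x; rewrite inE => /mem_take; rewrite mem_enum.
have U : uniq (take k (enum A)) by rewrite take_uniq ?enum_uniq.
rewrite cardsE; move/card_uniqP: U => ->.
rewrite size_take -cardE; case: ltngtP hk => //; lia.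
Qed.

Lemma geo m : \sum_(l < m) 256 ^ l < 256 ^ m.
Proof.
elim: m => [|m IH]; first by rewrite big_ord0.
rewrite big_ord_recr /= expnS.
move: IH; set S := \sum_(i < m) _; set P := 256 ^ m; lia.
Qed.

Lemma key_sym n' (i j : 'I_n'.+1) : key i j = key j i.
Proof.
rewrite /key; case: ltngtP => // h.
by have -> : i = j by apply/val_inj.
Qed.

Definition sumrel (A B : Type) (ea : rel A) (eb : rel B) : rel (A + B) :=
  fun x y => match x, y with
             | inl a, inl b => ea a b
             | inr a, inr b => eb a b
             | _, _ => false end.

Definition isl (A B : Type) (x : A + B) := if x is inl _ then true else false.

Lemma path_side (A B : Type) (ea : rel A) (eb : rel B) x p :
  path (sumrel ea eb) x p -> all (fun y => isl y == isl x) p.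
Proof.
elim: p x => //= y p IH x /andP[exy py].
have E : isl y = isl x by case: x y exy {py} => ? [].
by rewrite E eqxx /=; move: (IH y py); rewrite E.
Qed.

Lemma sum_cycle (A B : Type) (ea : rel A) (eb : rel B) (s : seq (A + B)) :
  cycle (sumrel ea eb) s -> (exists s1, s = map inl s1) \/ (exists s2, s = map inr s2).
Proof.
case: s => [|x s']; first by left; exists [::].
rewrite /= => /path_side; rewrite all_rcons eqxx /= => Hall.
case: x Hall => [a|b] Hall.
- left; exists (a :: map (fun y => if y is inl a' then a' else a) s').
  congr (_ :: _); elim: s' Hall => //= y p IH /andP[hy hp].
  by rewrite -IH //; case: y hy.
- right; exists (b :: map (fun y => if y is inr b' then b' else b) s').
  congr (_ :: _); elim: s' Hall => //= y p IH /andP[hy hp].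
  by rewrite -IH //; case: y hy.
Qed.

Theorem mainTheorem13 (g : nat) :
  (3 <= g)%N ->
  exists (T : finType) (e : rel T),
    simple_graph e /\ has_girth e g /\ ~ in_CBU e.
Proof.
case: g => [//|g'] g3.
set g := g'.+1 in g3 *.
set q := 256 ^ g.
have q0 : 0 < q by rewrite expn_gt0.
pose Q := q.-1.
have EQ : Q.+1 = q by rewrite prednK.
pose n' := (256 * q).-1.
have En : n'.+1 = 256 * q by rewrite prednK // muln_gt0.
have hN : #|{: 'I_n'.+1 * 'I_n'.+1}| = n'.+1 * n'.+1 by rewrite card_prod card_ord.
pose c := 128 * q. pose t := 32 * q. pose K := 16 * q * (32 * q - 1).
have Hgq : g < q.
  by rewrite /q; elim: (g) => // m IH; rewrite expnS; lia.
have H1 : 2 * (\sum_(l < g | 2 < l) n'.+1 ^ l * Q.+1 ^ (#|{: 'I_n'.+1 * 'I_n'.+1}| - l))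
     < c * Q.+1 ^ #|{: 'I_n'.+1 * 'I_n'.+1}|.
  rewrite hN EQ En.
  set N := 256 * q * (256 * q).
  have gN : g <= N by rewrite /N; nia.
  have S1 : \sum_(l < g | 2 < l) (256 * q) ^ l * q ^ (N - l) <= q ^ N * \sum_(l < g) 256 ^ l.
    rewrite big_distrr /=; apply: leq_trans (_ : _ <= \sum_(l < g) 256 ^ l * q ^ N) _.
      apply: (@leq_trans (\sum_(l < g | 2 < l) 256 ^ l * q ^ N)).
        apply: eq_leq; apply: eq_bigr => l _; rewrite expnMn -mulnA -expnD subnKC //.
        by apply: leq_trans gN; apply: ltnW.
      by rewrite [X in _ <= X](bigID (fun l : 'I_g => 2 < l)) /= leq_addr.
    by apply: leq_sum => l _; rewrite mulnC.
  have S2 := geo g.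
  have qN : 0 < q ^ N by rewrite expn_gt0 q0.
  apply: (@leq_ltn_trans (2 * (q ^ N * \sum_(l < g) 256 ^ l))); first by rewrite leq_mul2l S1 orbT.
  move: S2 qN; rewrite -/q /c.
  set S := \sum_(l < g) 256 ^ l; set P := q ^ N.
  nia.
have H2 : 2 * K + t = t * t.
  rewrite /K /t; case: (q) q0 => // r _; nia.
have H3 : Q.+1 * n'.+2 <= K.
  rewrite EQ -[n'.+2]/(n'.+1.+1) En /K; case: (q) q0 => // r _; nia.
have H4 : K <= #|{: 'I_n'.+1 * 'I_n'.+1}|.
  rewrite hN En /K; case: (q) q0 => // r _; nia.
have [f [Xf If]] := @exists_good Q n' g c t K H1 H2 H3 H4.
pose B : {set 'I_n'.+1} := \bigcup_(l < g | 2 < l)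
   [set head ord0 (tval s) | s : l.-tuple 'I_n'.+1 in [set s : l.-tuple 'I_n'.+1 | uniq s && cycle (ef f) s]].
have cB : #|B| <= Xc g f.
  apply: leq_trans (card_bigcup_le _ _) _; apply: leq_sum => l _; apply: leq_imset_card.
pose TH := {v : 'I_n'.+1 | v \notin B}.
pose eH : rel TH := fun u v => ef f (val u) (val v).
exists (TH + 'I_g)%type, (sumrel eH (@ec g)).
split; [|split].
- split.
  + move=> [u|i] [v|j] //=; last by rewrite /ec orbC.
    by rewrite /eH /ef eq_sym key_sym.
  + move=> [u|i] /=; first by rewrite /eH /ef eqxx.
    rewrite /ec orbb.
    have hi := ltn_ord i; rewrite modS //; case: ifP => /eqP h; apply/negbTE; apply/eqP => h2; lia.
- split.
  + exists (map inr (enum 'I_g)); split; first by rewrite size_map size_enum_ord.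
    split => //; split; first by rewrite map_inj_uniq ?enum_uniq // => x y [].
    by rewrite cycle_map; exact: cyc_full.
  + move=> s k [sk [k3 [us cs]]]; rewrite leqNgt; apply/negP => kg.
    case: (sum_cycle cs) => [[s1 E]|[s2 E]]; subst s.
    * rewrite cycle_map in cs; rewrite map_inj_uniq in us; last by move=> x y [].
      rewrite size_map in sk.
      pose s3 := map val s1.
      have c3 : cycle (ef f) s3 by rewrite cycle_map.
      have u3 : uniq s3 by rewrite map_inj_uniq //; apply: val_inj.
      have z3 : size s3 < g by rewrite size_map sk.
      have hB : head ord0 s3 \in B.
        apply/bigcupP; exists (Ordinal z3); first by rewrite /= size_map sk.
        apply/imsetP; exists (in_tuple s3) => //; by rewrite inE u3 c3.
      move: hB; rewrite /s3; clear c3 u3 z3 s3.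
      case: s1 us cs sk => [|u s1'] /= _ _ sk; first by rewrite -sk in k3.
      by move=> hB; have := valP u; rewrite hB.
    * rewrite cycle_map in cs; rewrite map_inj_uniq in us; last by move=> x y [].
      rewrite size_map in sk.
      by apply: (@cyc_short g s2 us cs); rewrite sk.
- move=> Hc.
  have inj : injective (@inl TH 'I_g) by move=> x y [].
  have Hc' := cbu_restrict inj Hc.
  have [I [Iind IT]] := cbu_indep Hc'.
  have cTH : #|{: TH}| = n'.+1 - #|B|.
    have E := cardsC B; rewrite card_ord in E.
    have E2 : #|[pred x | x \notin B]| = #|~: B| by apply: eq_card => x; rewrite !inE.
    rewrite card_sig E2; lia.
  pose J := [set val x | x in I].
  have cJ : #|J| = #|I| by rewrite card_imset //; apply: val_inj.
  have tJ : t <= #|J|.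
    rewrite cJ; move: IT En Xf cB; rewrite cTH /c /t; lia.
  have [S SJ St] := subset_size tJ.
  move/negP: If; apply; apply/existsP; exists S; rewrite St eqxx /=.
  apply/forallP => i; apply/implyP => iS; apply/forallP => j; apply/implyP => jS.
  apply/implyP => ij.
  have /imsetP [u uI Eu] := subsetP SJ i iS.
  have /imsetP [v vI Ev] := subsetP SJ j jS.
  have nuv : u != v by apply/eqP => E; move: ij; rewrite Eu Ev E ltnn.
  have := Iind u v uI vI nuv; rewrite /= /eH /ef -Eu -Ev /key ij.
  have -> : (i != j) by apply/eqP => E; move: ij; rewrite E ltnn.
  by [].
Qed.
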